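(* In the setting of the discrete snake in $\mathbb{Z}^4$ described in the context, let $k\ge1$ be such that $\mathbb{P}(\widehat W_k=0)>0$, and let $\widetilde W_k=(\widetilde W_k(j))_{j\le0}$ with $\widetilde W_k(j)=W_k(\zeta_k+j)$. Under $\mathbb{P}(\cdot\mid\widehat W_k=0)$, the pairs $(W_0,\widetilde W_k)$ and $(\widetilde W_k,W_0)$ have the same distribution.
   Context: $\theta$ is a symmetric probability measure on $\mathbb{Z}^4$ with small exponential moments, not supported on a strict subgroup, with covariance matrix $\sigma^2\mathrm{Id}$. $S$ is the random walk with jump law $\theta$ started at $0$. The discrete snake $(W_n)$ is the Markov chain on paths $w:\{k\le\zeta(w)\}\to\mathbb{Z}^4$ with kernel $Q(w,\cdot)=\frac12\delta_{\overline w}+\frac12\sum_x\theta(x)\delta_{w\oplus(\widehat w+x)}$ ($\widehat w=w(\zeta(w))$, $\overline w$ erases the endpoint, $w\oplus x$ appends $x$); $\zeta_n=\zeta(W_n)$. Under $\mathbb{P}$, $\zeta_0=0$ and $W_0=(-S_{-k})_{k\le0}$. *)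

(* Defs.v *)
From HB Require Import structures.
From mathcomp Require Import all_boot all_order all_algebra.
From mathcomp Require Import all_classical all_reals all_analysis.
Set Implicit Arguments. Unset Strict Implicit. Unset Printing Implicit Defensive.
Import Order.TTheory GRing.Theory Num.Theory.
Local Open Scope classical_set_scope.
Local Open Scope ring_scope.

Notation Z4 := 'rV[int]_4.

(* l^1 norm on Z^4 (any norm gives the same notion of small exponential moments) *)
Definition normZ4 (R : realType) (x : Z4) : R := (\sum_(i < 4) `|x ord0 i|)%:~R.

Definition is_pmf (R : realType) (theta : Z4 -> R) :=
  (forall x, 0 <= theta x) /\ (\esum_(x in [set: Z4]) (theta x)%:E = 1)%E.

Definition symmetric_law (R : realType) (theta : Z4 -> R) :=
  forall x, theta (- x) = theta x.

Definition small_exp_moments (R : realType) (theta : Z4 -> R) :=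
  exists2 lam : R, 0 < lam &
    (\esum_(x in [set: Z4]) (theta x * expR (lam * normZ4 R x))%:E < +oo)%E.

Definition is_subgroupZ4 (G : set Z4) :=
  G 0 /\ (forall x y, G x -> G y -> G (x - y)).

Definition generating_support (R : realType) (theta : Z4 -> R) :=
  forall G : set Z4, is_subgroupZ4 G -> [set x | 0 < theta x] `<=` G -> G = setT.

(* covariance matrix sigma^2 Id:  E[X_i^2] = sigma^2 and, for i <> j,
   E[(X_i X_j)^+] = E[(X_i X_j)^-]  (i.e. E[X_i X_j] = 0, both being finite) *)
Definition covariance_scalar (R : realType) (theta : Z4 -> R) (sigma : R) :=
  (forall i : 'I_4,
     (\esum_(x in [set: Z4]) (theta x * ((x ord0 i)%:~R) ^+ 2)%:E = (sigma ^+ 2)%:E)%E) /\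
  (forall i j : 'I_4, i != j ->
     (\esum_(x in [set: Z4]) (theta x * Num.max ((x ord0 i * x ord0 j)%:~R) 0)%:E =
      \esum_(x in [set: Z4]) (theta x * Num.max (- (x ord0 i * x ord0 j)%:~R) 0)%:E)%E).

(* A path w : {k <= zeta(w)} -> Z^4 is encoded by its lifetime zeta(w) : int
   and its "backward" values: ptail w m = w(zeta(w) - m), m : nat. *)
Record path := Path { pzeta : int ; ptail : nat -> Z4 }.

Definition phat (w : path) : Z4 := ptail w 0.
Definition perase (w : path) : path := Path (pzeta w - 1) (fun m => ptail w m.+1).
Definition pappend (w : path) (y : Z4) : path :=
  Path (pzeta w + 1) (fun m => if m is m'.+1 then ptail w m' else y).

(* one step of the kernel Q(w,.) = 1/2 delta_{\overline w}
   + 1/2 sum_x theta(x) delta_{w (+) (\hat w + x)}, driven by a fair coin c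
   (true = erase) and an independent jump x with law theta *)
Definition snake_step (w : path) (c : bool) (x : Z4) : path :=
  if c then perase w else pappend w (phat w + x).

Fixpoint snake (W0 : path) (c : nat -> bool) (X : nat -> Z4) (n : nat) : path :=
  if n is n'.+1 then snake_step (snake W0 c X n') (c n') (X n') else W0.

Definition rwalk (xi : nat -> Z4) (m : nat) : Z4 := \sum_(i < m) xi i.

Definition snake_init (xi : nat -> Z4) : path := Path 0 (fun m => - rwalk xi m).

(* \widetilde w (j) = w(zeta(w) + j), j <= 0, encoded as j = -m *)
Definition pshift (w : path) : nat -> Z4 := ptail w.

Definition preimages {d} {Omega : measurableType d} {T : Type} (Y : Omega -> T)
  : set (set Omega) := [set A | exists B : set T, A = Y @^-1` B].

Definition discrete_rv {d} {Omega : measurableType d} {T : Type} (Y : Omega -> T) :=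
  forall B : set T, measurable (Y @^-1` B).

Definition mutually_independent {d} {Omega : measurableType d} {R : realType}
  (P : probability Omega R) {I : eqType} (F : I -> set (set Omega)) :=
  forall (J : seq I) (A : I -> set Omega), uniq J ->
    (forall i, i \in J -> F i (A i)) ->
    P [set w | forall i, i \in J -> A i w] = (\prod_(i <- J) P (A i))%E.

Definition condP {d} {Omega : measurableType d} {R : realType}
  (P : probability Omega R) (E A : set Omega) : R :=
  fine (P (A `&` E)) / fine (P E).

Definition seq_pair_cylinders : set (set ((nat -> Z4) * (nat -> Z4))) :=
  [set A | exists (m : nat) (x : Z4),
     A = [set p | p.1 m = x] \/ A = [set p | p.2 m = x]].

Definition seq_pair_measurable (B : set ((nat -> Z4) * (nat -> Z4))) :=
  <<s seq_pair_cylinders >> B.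

(* Main.v *)
Require Import Defs.
From HB Require Import structures.
From mathcomp Require Import all_boot all_order all_algebra.
From mathcomp Require Import all_classical all_reals all_analysis.
From mathcomp Require Import zify ring.
Import Order.TTheory GRing.Theory Num.Theory.
Local Open Scope classical_set_scope.
Local Open Scope ring_scope.

(* ---- stack of unmatched up-steps ---- *)
Definition sstep (p : seq nat * nat) (n : nat) (b : bool) : seq nat * nat :=
  if b then (if p.1 is _ :: s then (s, p.2) else (p.1, p.2.+1)) else (n :: p.1, p.2).

Fixpoint st (c : nat -> bool) (n : nat) : seq nat * nat :=
  if n is n'.+1 then sstep (st c n') n' (c n') else ([::], 0%N).

Lemma st_ext (c c' : nat -> bool) n : (forall i, (i < n)%N -> c i = c' i) -> st c n = st c' n.
Proof.
elim: n => [//|n IH] H /=; rewrite IH ?H // => i Hi; apply: H; exact: ltnW.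
Qed.

Lemma st_props c n : all (fun t => (t < n)%N) (st c n).1 /\ uniq (st c n).1.
Proof.
elim: n => [//|n [IH1 IH2]] /=; rewrite /sstep; case: (c n).
  case: (st c n) IH1 IH2 => [[|t s] mm] //= /andP[_ H1] /andP[_ H2]; split=> //.
  by apply: sub_all H1 => x /= /ltnW.
case: (st c n) IH1 IH2 => [s mm] /= H1 H2; split.
  by rewrite ltnSn /=; apply: sub_all H1 => x /= /ltnW.
rewrite H2 andbT; apply/negP => /(allP H1); by rewrite ltnn.
Qed.

Definition comb (p q : nat * nat) : nat * nat :=
  (q.1 + (p.1 - q.2), p.2 + (q.2 - p.1))%N.
Definition scnt (b : bool) : nat * nat := if b then (0, 1)%N else (1, 0)%N.
Fixpoint cntl (l : seq bool) : nat * nat :=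
  if l is x :: l' then comb (scnt x) (cntl l') else (0, 0)%N.

Lemma combA p q r : comb p (comb q r) = comb (comb p q) r.
Proof. case: p q r => [a b] [c d] [e f]; rewrite /comb /=; congr pair; lia. Qed.

Lemma cntl_cat l l' : cntl (l ++ l') = comb (cntl l) (cntl l').
Proof.
elim: l => [|x l IH] /=; first by case: (cntl l') => a b; rewrite /comb /=; congr pair; lia.
by rewrite IH combA.
Qed.

Definition swp (p : nat * nat) := (p.2, p.1).

Lemma cntl_rev l : cntl (rev (map negb l)) = swp (cntl l).
Proof.
elim: l => [//|x l IH] /=; rewrite rev_cons -cats1 cntl_cat IH /=.
case: (cntl l) => a b; case: x; rewrite /comb /swp /=; congr pair; lia.
Qed.

Lemma st_cnt c n : (size (st c n).1, (st c n).2) = cntl [seq c i | i <- iota 0 n].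
Proof.
elim: n => [//|n IH]; rewrite -addn1 iotaD map_cat cntl_cat -IH /= add0n addn1 /=.
rewrite /sstep; case: (c n); case: (st c n) => [[|t s] mm]; rewrite /comb /=; congr pair; lia.
Qed.

Definition tailf (xi : nat -> Z4) (X : nat -> Z4) (p : seq nat * nat) (r : nat) : Z4 :=
  if (r < size p.1)%N then - rwalk xi p.2 + \sum_(t <- drop r p.1) X t
  else - rwalk xi (r - size p.1 + p.2).

Lemma snake_inv xi c X n r :
  ptail (snake (snake_init xi) c X n) r = tailf xi X (st c n) r.
Proof.
elim: n r => [|n IH] r /=.
  by rewrite /tailf /= subn0 addn0.
rewrite /snake_step /sstep /tailf; case: (c n) => /=.
  rewrite IH /tailf; case: (st c n) => [[|t s] mm] /=.
    by rewrite !subn0 addSnnS.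
  rewrite ltnS; case: ifP => // _; by rewrite subSS.
case: r => [|r] /=.
  rewrite /phat IH /tailf /=; case: (st c n) => [s mm] /=.
  case: s => [|t s] /=.
  by rewrite add0n big_seq1.
  by rewrite [in RHS]big_cons [X n + _]addrC addrA.
rewrite IH /tailf /=; case: (st c n) => [s mm] /=.
by rewrite ltnS subSS.
Qed.

Lemma snake_ext W0 c c' X X' n :
  (forall i, (i < n)%N -> c i = c' i /\ X i = X' i) -> snake W0 c X n = snake W0 c' X' n.
Proof.
elim: n => [//|n IH] H /=; have [-> ->] := H n (ltnSn n).
by rewrite IH // => i Hi; apply: H; exact: ltnW.
Qed.

Lemma rwalkS xi j : rwalk xi j.+1 = rwalk xi j + xi j.
Proof. by rewrite /rwalk big_ord_recr. Qed.

Lemma rwalk0 xi : rwalk xi 0 = 0.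
Proof. by rewrite /rwalk big_ord0. Qed.

Lemma rwalk_eq xi (v : nat -> Z4) N :
  (forall j, (j <= N)%N -> - rwalk xi j = v j) <->
  (v 0%N = 0 /\ forall j, (j < N)%N -> xi j = v j - v j.+1).
Proof.
split.
  move=> H; split; first by rewrite -H // rwalk0 oppr0.
  move=> j Hj; rewrite -H ?(ltnW Hj) // -H // rwalkS; by rewrite opprK addKr.
move=> [H0 H] j; elim: j => [|j IH] Hj; first by rewrite rwalk0 oppr0 H0.
rewrite rwalkS opprD IH ?(ltnW Hj) // H //; by rewrite opprB addrC subrK.
Qed.

Lemma sum_drop (X : nat -> Z4) (b : nat -> Z4) (s : seq nat) :
  (forall r, (r < size s)%N -> X (nth 0%N s r) = b r - b r.+1) ->
  forall r, (r <= size s)%N -> \sum_(t <- drop r s) X t = b r - b (size s).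
Proof.
elim: s b => [|t s IH] b H r Hr /=.
  by move: Hr; rewrite leqn0 => /eqP ->; rewrite big_nil subrr.
case: r Hr => [|r] Hr /=.
  rewrite big_cons (H 0%N) //.
  have := IH (fun i => b i.+1) (fun i Hi => H i.+1 Hi) 0%N (leq0n _); rewrite drop0 => ->.
  by rewrite addrA subrK.
exact: (IH (fun i => b i.+1) (fun i Hi => H i.+1 Hi) r Hr).
Qed.

Definition valf (M u m : nat) (a b : nat -> Z4) (j : nat) : Z4 :=
  if (j < M)%N then a j else b (j + u - m)%N.

Definition condb (M u m : nat) (a b : nat -> Z4) : bool :=
  (a 0%N == 0) && (b 0%N == 0) &&
  [forall r : 'I_M, (u <= r)%N ==> (r + m - u < M)%N ==> (b r == a (r + m - u)%N)].

Lemma condbP M u m a b : reflect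
  [/\ a 0%N = 0, b 0%N = 0 &
     forall r, (u <= r)%N -> (r < M)%N -> (r + m - u < M)%N -> b r = a (r + m - u)%N]
  (condb M u m a b).
Proof.
apply: (iffP idP).
  move=> /andP[/andP[/eqP H1 /eqP H2] /forallP H3]; split=> // r H4 H5 H6.
  by have := H3 (Ordinal H5) => /= /implyP /(_ H4) /implyP /(_ H6) /eqP.
move=> [H1 H2 H3]; rewrite /condb H1 H2 !eqxx /=; apply/forallP => r.
by apply/implyP => H4; apply/implyP => H6; apply/eqP; apply: H3.
Qed.

Lemma condb_sym M u m a b : (u < M)%N -> (m < M)%N ->
  condb M u m a b = condb M m u b a.
Proof.
move=> uM mM.
apply/condbP/condbP => -[H1 H2 H3]; split=> // r H4 H5 H6.
  have := H3 (r + u - m)%N; rewrite (_ : (r + u - m + m - u = r)%N); last by lia.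
  by move=> -> //; lia.
have := H3 (r + m - u)%N; rewrite (_ : (r + m - u + u - m = r)%N); last by lia.
by move=> -> //; lia.
Qed.

Definition wtp (R : realType) (theta : Z4 -> R) (M u m : nat) (a b : nat -> Z4) : R :=
  if condb M u m a b then
    (\prod_(0 <= j < M.-1 + (m - u)) theta (valf M u m a b j - valf M u m a b j.+1)) *
    \prod_(0 <= r < u) theta (b r - b r.+1)
  else 0.
Arguments wtp {R}.

Lemma test (M j : nat) : (0 <= j < M.-1)%N -> (j.+1 < M)%N.
Proof. lia. Qed.
Lemma wtp_sym_le (R : realType) (theta : Z4 -> R) M u m a b :
  (u < M)%N -> (m < M)%N -> (u <= m)%N ->
  wtp theta M u m a b = wtp theta M m u b a.
Proof.
move=> uM mM um; rewrite /wtp -(condb_sym M u m a b uM mM).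
case: (condbP M u m a b) => [[H1 H2 H3]|//].
have -> : (u - m = 0)%N by lia.
rewrite addn0.
have E1 : \prod_(0 <= j < M.-1) theta (valf M m u b a j - valf M m u b a j.+1) =
          \prod_(0 <= j < M.-1) theta (b j - b j.+1).
  apply: eq_big_nat => j /andP[_ Hj]; rewrite /valf.
  have -> : (j < M)%N by lia.
  have -> : (j.+1 < M)%N by lia.
  by [].
rewrite E1.
have E2 : \prod_(0 <= j < M.-1 + (m - u)) theta (valf M u m a b j - valf M u m a b j.+1) =
  (\prod_(0 <= j < m) theta (a j - a j.+1)) *
  (\prod_(m <= j < M.-1) theta (a j - a j.+1)) *
  (\prod_(M.-1 <= j < M.-1 + (m - u)) theta (b (j + u - m)%N - b (j + u - m)%N.+1)).
  rewrite (big_cat_nat _ (n := M.-1)) //=; last by lia.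
  rewrite (big_cat_nat _ (n := m)) //=; last by lia.
  rewrite -!mulrA; congr (_ * _).
    apply: eq_big_nat => j /andP[_ Hj]; rewrite /valf.
    have -> : (j < M)%N by lia.
    have -> : (j.+1 < M)%N by lia.
    by [].
  congr (_ * _).
    apply: eq_big_nat => j /andP[_ Hj]; rewrite /valf.
    have -> : (j < M)%N by lia.
    have -> : (j.+1 < M)%N by lia.
    by [].
  apply: eq_big_nat => j /andP[Hj1 Hj]; rewrite /valf.
  have -> : (j.+1 < M)%N = false by lia.
  have -> : ((j + u - m).+1 = j.+1 + u - m)%N by lia.
  case: ltnP => Hj2 //.
  have Ej : j = M.-1 by lia.
  rewrite (H3 (j + u - m)%N); try lia.
  by have -> : (j + u - m + m - u = j)%N by lia.
rewrite E2.
have E3 : \prod_(m <= j < M.-1) theta (a j - a j.+1) =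
          \prod_(u <= j < M.-1 - (m - u)) theta (b j - b j.+1).
  rewrite {1}(_ : m = u + (m - u))%N; last by lia.
  rewrite {1}(_ : M.-1 = (M.-1 - (m - u)) + (m - u))%N; last by lia.
  rewrite big_addn addnK; apply: eq_big_nat => j /andP[Hj1 Hj].
  rewrite (H3 j); try lia. rewrite (H3 j.+1); try lia.
  have -> : (j + m - u = j + (m - u))%N by lia.
  by have -> : (j.+1 + m - u = (j + (m - u)).+1)%N by lia.
have E4 : \prod_(M.-1 <= j < M.-1 + (m - u)) theta (b (j + u - m)%N - b (j + u - m)%N.+1) =
          \prod_(M.-1 - (m - u) <= j < M.-1) theta (b j - b j.+1).
  rewrite {1}(_ : M.-1 = (M.-1 - (m - u)) + (m - u))%N; last by lia.
  rewrite big_addn addnK; apply: eq_big_nat => j /andP[Hj1 Hj].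
  by have -> : (j + (m - u) + u - m = j)%N by lia.
have E5 : \prod_(0 <= j < M.-1) theta (b j - b j.+1) =
   \prod_(0 <= j < u) theta (b j - b j.+1) *
   \prod_(u <= j < M.-1 - (m - u)) theta (b j - b j.+1) *
   \prod_(M.-1 - (m - u) <= j < M.-1) theta (b j - b j.+1).
  rewrite (big_cat_nat _ (n := M.-1 - (m - u))) //=; last by lia.
  by rewrite (big_cat_nat _ (n := u)) //=; lia.
rewrite E3 E4 E5; ring.
Qed.

Lemma wtp_sym (R : realType) (theta : Z4 -> R) M u m a b :
  (u < M)%N -> (m < M)%N -> wtp theta M u m a b = wtp theta M m u b a.
Proof.
move=> uM mM; case: (leqP u m) => H; first exact: wtp_sym_le.
by symmetry; apply: wtp_sym_le => //; exact: ltnW.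
Qed.

Lemma st_size c n : (size (st c n).1 + (st c n).2 <= n)%N.
Proof.
elim: n => [//|n IH] /=; rewrite /sstep; case: (c n); case: (st c n) IH => [[|t s] mm] /=; lia.
Qed.

Lemma tailf_le xi X p r : (r <= size p.1)%N ->
  tailf xi X p r = - rwalk xi p.2 + \sum_(t <- drop r p.1) X t.
Proof.
rewrite /tailf leq_eqVlt => /orP[/eqP ->|->] //.
by rewrite ltnn subnn add0n drop_size big_nil addr0.
Qed.

Lemma event_char (xiw : nat -> Z4) (cw : nat -> bool) (Xw : nat -> Z4) (cf : nat -> bool)
  k M (a b : nat -> Z4) :
  (k < M)%N -> (forall n, (n < k)%N -> cw n = cf n) ->
  ((forall r, (r < M)%N -> - rwalk xiw r = a r /\
      ptail (snake (snake_init xiw) cw Xw k) r = b r) /\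
   ptail (snake (snake_init xiw) cw Xw k) 0%N = 0)
  <->
  [/\ condb M (size (st cf k).1) (st cf k).2 a b,
      (forall j, (j < M.-1 + ((st cf k).2 - size (st cf k).1))%N ->
          xiw j = valf M (size (st cf k).1) (st cf k).2 a b j -
                  valf M (size (st cf k).1) (st cf k).2 a b j.+1) &
      (forall r, (r < size (st cf k).1)%N ->
          Xw (nth 0%N (st cf k).1 r) = b r - b r.+1)].
Proof.
move=> kM Hc.
have -> : snake (snake_init xiw) cw Xw k = snake (snake_init xiw) cf Xw k.
  by apply: snake_ext => i Hi; split => //; apply: Hc.
have Hsz := st_size cf k.
set s := (st cf k).1; set m := (st cf k).2; set u := size s.
have Hum : (u + m <= k)%N by [].
have HT : forall r, ptail (snake (snake_init xiw) cf Xw k) r = tailf xiw Xw (st cf k) r.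
  by move=> r; rewrite snake_inv.
have HTl : forall r, (r <= u)%N -> ptail (snake (snake_init xiw) cf Xw k) r =
     - rwalk xiw m + \sum_(t <- drop r s) Xw t.
  by move=> r Hr; rewrite HT tailf_le.
have HTg : forall r, (u <= r)%N -> ptail (snake (snake_init xiw) cf Xw k) r =
     - rwalk xiw (r - u + m).
  move=> r Hr; rewrite HT /tailf -/s -/m -/u.
  case: ltnP => // H; exfalso; lia.
split.
  move=> [HA HE]; split.
  - apply/condbP; split.
    + by have [<- _] := HA 0%N (leq_ltn_trans (leq0n _) (leq_ltn_trans (leq0n _) kM)); rewrite rwalk0 oppr0.
    + by have [_ <-] := HA 0%N (leq_ltn_trans (leq0n _) kM).
    + move=> r H1 H2 H3; have [_ <-] := HA r H2; rewrite HTg //.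
      have [<- _] := HA _ H3; congr (- rwalk _ _); lia.
  - apply: (proj2 (proj1 (rwalk_eq xiw (valf M u m a b) (M.-1 + (m - u))) _)).
    move=> j Hj; rewrite /valf; case: ltnP => HjM.
      by have [-> _] := HA j HjM.
    have [_ <-] := HA (j + u - m)%N ltac:(lia).
    rewrite HTg; last by lia.
    congr (- rwalk _ _); lia.
  - move=> r Hr.
    have [_ E1] := HA r ltac:(lia); have [_ E2] := HA r.+1 ltac:(lia).
    rewrite -E1 -E2 !HTl; try lia.
    rewrite (drop_nth 0%N Hr) big_cons.
    by rewrite addrCA addrK.
move=> [/condbP[H1 H2 H3] Hxi HX].
have Hv0 : valf M u m a b 0%N = 0.
  by rewrite /valf; have -> : (0 < M)%N by lia.
have HS := (proj2 (rwalk_eq xiw (valf M u m a b) (M.-1 + (m - u)))) (conj Hv0 Hxi).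
have HSa : forall r, (r < M)%N -> - rwalk xiw r = a r.
  by move=> r Hr; rewrite HS; [rewrite /valf Hr | lia].
have HTb : forall r, (r < M)%N -> ptail (snake (snake_init xiw) cf Xw k) r = b r.
  move=> r Hr; case: (ltnP r u) => Hru.
    rewrite HTl; last by lia.
    rewrite (sum_drop Xw b s HX); last by lia.
    rewrite HSa; last by lia.
    rewrite (H3 u); try lia.
    have -> : (u + m - u = m)%N by lia.
    by rewrite addrC subrK.
  rewrite HTg //.
  case: (ltnP (r - u + m) M) => Hj.
    rewrite HSa // H3 //; last by lia.
    by congr a; lia.
  rewrite HS; last by lia.
  rewrite /valf ltnNge Hj /=; congr b; lia.
split; first by move=> r Hr; split; [exact: HSa | exact: HTb].
by rewrite HTb //; lia.
Qed.

Lemma bigsetU_memP {T : Type} {I : eqType} (l : seq I) (F : I -> set T) w :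
  (\big[setU/set0]_(x <- l) F x) w <-> exists x, x \in l /\ F x w.
Proof.
elim: l => [|y l IH]; first by rewrite big_nil; split => // -[x []].
rewrite big_cons; split.
  case=> [H|/IH[x [H1 H2]]]; first by exists y; rewrite mem_head.
  by exists x; rewrite in_cons H1 orbT.
move=> [x []]; rewrite in_cons => /orP[/eqP -> H|H1 H2]; first by left.
by right; apply/IH; exists x.
Qed.

Definition Jl (k N : nat) (s : seq nat) : seq ((nat + nat) + nat) :=
  [seq inl (inr n) | n <- iota 0 k] ++ [seq inl (inl j) | j <- iota 0 N] ++
  [seq inr t | t <- s].

Lemma Jl_uniq k N s : uniq s -> uniq (Jl k N s).
Proof.
move=> us; rewrite /Jl !cat_uniq !map_inj_uniq ?iota_uniq //=; last 3 first.
- by move=> x y [].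
- by move=> x y [].
- by move=> x y [].
rewrite us /= andbT; apply/andP; split.
  apply/hasPn => x; rewrite mem_cat => /orP[] /mapP[y _ ->]; apply/mapP => -[z _] //.
apply/hasPn => x /mapP[y _ ->]; apply/mapP => -[z _] //.
Qed.

Section Meas.
Context (R : realType) (theta : Z4 -> R) (d : measure_display) (Omega : measurableType d)
  (P : probability Omega R)
  (xi : nat -> Omega -> Z4) (c : nat -> Omega -> bool) (X : nat -> Omega -> Z4).

Definition Aset (cs : seq bool) (v : nat -> Z4) (s : seq nat) (b : nat -> Z4)
  (i : (nat + nat) + nat) : set Omega :=
  match i with
  | inl (inl j) => xi j @^-1` [set v j - v j.+1]
  | inl (inr n) => c n @^-1` [set nth false cs n]
  | inr t => X t @^-1` [set b (index t s) - b (index t s).+1]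
  end.

Lemma Aset_memP k N cs v s b w : uniq s ->
  (forall i, i \in Jl k N s -> Aset cs v s b i w) <->
  [/\ forall n, (n < k)%N -> c n w = nth false cs n,
      forall j, (j < N)%N -> xi j w = v j - v j.+1 &
      forall r, (r < size s)%N -> X (nth 0%N s r) w = b r - b r.+1].
Proof.
move=> us; split.
  move=> H; split.
  - move=> n Hn; apply: (H (inl (inr n))).
    by rewrite /Jl mem_cat; apply/orP; left; apply/mapP; exists n => //; rewrite mem_iota.
  - move=> j Hj; apply: (H (inl (inl j))).
    rewrite /Jl !mem_cat; apply/orP; right; apply/orP; left.
    by apply/mapP; exists j => //; rewrite mem_iota.
  - move=> r Hr; have := H (inr (nth 0%N s r)).
    rewrite /= index_uniq //; apply.
    rewrite /Jl !mem_cat; apply/orP; right; apply/orP; right.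
    by apply/mapP; exists (nth 0%N s r) => //; rewrite mem_nth.
move=> [H1 H2 H3] i; rewrite /Jl !mem_cat => /orP[|/orP[]] /mapP[y Hy ->] /=.
- by apply: H1; move: Hy; rewrite mem_iota.
- by apply: H2; move: Hy; rewrite mem_iota.
- have Hi : (index y s < size s)%N by rewrite index_mem.
  by have := H3 _ Hi; rewrite nth_index.
Qed.


Lemma setI_list (J : seq ((nat + nat) + nat)) (A : (nat + nat) + nat -> set Omega) :
  [set w | forall i, i \in J -> A i w] = \big[setI/setT]_(i <- J) A i.
Proof.
elim: J => [|j J IH]; first by rewrite big_nil; apply/seteqP; split => w //.
rewrite big_cons -IH; apply/seteqP; split => w /=.
  by move=> H; split; [apply: H; rewrite mem_head | move=> i Hi; apply: H; rewrite in_cons Hi orbT].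
by move=> [H1 H2] i; rewrite in_cons => /orP[/eqP ->|/H2].
Qed.

Lemma measure_list_sum {I : eqType} (l : seq I) (F : I -> set Omega) :
  uniq l -> (forall x, measurable (F x)) ->
  (forall x y, x != y -> F x `&` F y = set0) ->
  P (\big[setU/set0]_(x <- l) F x) = (\sum_(x <- l) P (F x))%E.
Proof.
move=> ul mF dF; elim: l ul => [|x l IH]; first by rewrite !big_nil measure0.
move=> /andP[xl ul]; rewrite !big_cons measureU; first by rewrite -(IH ul).
- exact: mF.
- by apply: bigsetU_measurable => i _; exact: mF.
apply/seteqP; split => // w [H1 /bigsetU_memP[y [Hy H2]]].
have : x != y by apply/eqP => E; move: xl; rewrite E Hy.
by move/dF => E; rewrite -E; split.
Qed.


Context (Hxi : forall i, discrete_rv (xi i)) (Hc : forall n, discrete_rv (c n))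
  (HX : forall n, discrete_rv (X n)).
Context (Pxi : forall i x, P (xi i @^-1` [set x]) = (theta x)%:E)
  (Pc : forall n, P (c n @^-1` [set true]) = (2^-1 : R)%:E)
  (PX : forall n x, P (X n @^-1` [set x]) = (theta x)%:E).
Context (Hind : mutually_independent P (fun a : (nat + nat) + nat =>
     match a with
     | inl (inl i) => preimages (xi i)
     | inl (inr n) => preimages (c n)
     | inr n => preimages (X n)
     end)).

Lemma Aset_meas cs v s b i : measurable (Aset cs v s b i).
Proof. by case: i => [[j|n]|t]; [apply: Hxi|apply: Hc|apply: HX]. Qed.

Lemma Ind_meas (J : seq ((nat + nat) + nat)) cs v s b : measurable [set w | forall i, i \in J -> Aset cs v s b i w].
Proof. by rewrite setI_list; apply: bigsetI_measurable => i _; exact: Aset_meas. Qed.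

Lemma Pc_any n bb : P (c n @^-1` [set bb]) = (2^-1 : R)%:E.
Proof.
case: bb => //.
have -> : c n @^-1` [set false] = ~` (c n @^-1` [set true]).
  by apply/seteqP; split => w /=; case: (c n w).
rewrite probability_setC ?Pc //; last exact: Hc.
by rewrite -EFinB; congr EFin; field.
Qed.

Lemma prod_const_iota (x : R) k : (\prod_(n <- iota 0 k) x = x ^+ k).
Proof. by rewrite big_const_seq count_predT size_iota; elim: k => //= k ->; rewrite exprS. Qed.

Lemma P_Ind k N cs v s b : uniq s ->
  P [set w | forall i, i \in Jl k N s -> Aset cs v s b i w] =
  ((2^-1 : R) ^+ k * \prod_(0 <= j < N) theta (v j - v j.+1) *
   \prod_(0 <= r < size s) theta (b r - b r.+1))%:E.
Proof.
move=> us; rewrite Hind; last 2 first.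
- exact: Jl_uniq.
- by move=> [[j|n]|t] _ /=; eexists.
rewrite /Jl !big_cat !big_map.
have E1 : (\prod_(i <- iota 0 k) P (Aset cs v s b (inl (inr i))))%E = (((2^-1 : R) ^+ k)%:E).
  rewrite (eq_bigr (fun _ => (2^-1 : R)%:E)); last by move=> n _; exact: Pc_any.
  by rewrite prodEFin prod_const_iota.
have E2 : (\prod_(i <- iota 0 N) P (Aset cs v s b (inl (inl i))))%E =
     (\prod_(0 <= j < N) theta (v j - v j.+1))%:E.
  rewrite (eq_bigr (fun j => (theta (v j - v j.+1))%:E)); last by move=> j _; exact: Pxi.
  by rewrite prodEFin /index_iota subn0.
have E3 : (\prod_(i <- s) P (Aset cs v s b (inr i)))%E =
     (\prod_(0 <= r < size s) theta (b r - b r.+1))%:E.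
  rewrite (eq_bigr (fun t => (theta (b (index t s) - b (index t s).+1))%:E)); last by move=> t _; exact: PX.
  rewrite prodEFin; congr EFin.
  rewrite [LHS](big_nth 0%N); apply: eq_big_nat => r /andP[_ Hr].
  by rewrite index_uniq.
rewrite E1 E2 E3 /=. rewrite -!EFinM. by rewrite mulrA.
Qed.


Definition Wk k w := snake (snake_init (fun i => xi i w)) (fun m => c m w) (fun m => X m w) k.

Definition Ev k M (a b : nat -> Z4) := [set w |
  (forall r, (r < M)%N -> - rwalk (fun i => xi i w) r = a r /\ ptail (Wk k w) r = b r) /\
  ptail (Wk k w) 0%N = 0].

Definition Coin k (cs : seq bool) := [set w | forall n, (n < k)%N -> c n w = nth false cs n].

Lemma Ev_coin k M a b cs : (k < M)%N ->
  Ev k M a b `&` Coin k cs =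
  if condb M (size (st (nth false cs) k).1) (st (nth false cs) k).2 a b then
    [set w | forall i, i \in Jl k (M.-1 + ((st (nth false cs) k).2 - size (st (nth false cs) k).1))
                               (st (nth false cs) k).1 ->
       Aset cs (valf M (size (st (nth false cs) k).1) (st (nth false cs) k).2 a b)
               (st (nth false cs) k).1 b i w]
  else set0.
Proof.
move=> kM; have us := (st_props (nth false cs) k).2.
apply/seteqP; split => w.
  move=> [HEv HC].
  have [Hcond Hx HXX] := (event_char (fun i => xi i w) (fun m => c m w) (fun m => X m w)
     (nth false cs) k M a b kM HC).1 HEv.
  by rewrite Hcond; apply/Aset_memP.
case: ifP => Hcond //= /Aset_memP => /(_ us) [HC Hx HXX].
split => //.
exact: ((event_char (fun i => xi i w) (fun m => c m w) (fun m => X m w)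
     (nth false cs) k M a b kM HC).2 (And3 Hcond Hx HXX)).
Qed.

Definition wcs (M k : nat) (a b : nat -> Z4) (cs : seq bool) : R :=
  (2^-1 : R) ^+ k * wtp theta M (size (st (nth false cs) k).1) (st (nth false cs) k).2 a b.

Lemma P_Ev k M a b : (k < M)%N ->
  measurable (Ev k M a b) /\
  P (Ev k M a b) = (\sum_(cs <- enum {: k.-tuple bool}) (wcs M k a b cs)%:E)%E.
Proof.
move=> kM.
have Emeas : forall cs, measurable (Ev k M a b `&` Coin k cs).
  move=> cs; rewrite Ev_coin //; case: ifP => _ //; exact: Ind_meas.
have Eun : Ev k M a b = \big[setU/set0]_(cs <- enum {: k.-tuple bool})
                          (Ev k M a b `&` Coin k cs).
  apply/seteqP; split => w.
    move=> Hw; apply/bigsetU_memP; exists [tuple c i w | i < k]; split; first by rewrite mem_enum.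
    split => // n Hn.
    by have := nth_mktuple (fun i : 'I_k => c i w) false (Ordinal Hn) => /= ->.
  by move=> /bigsetU_memP[cs [_ []]].
rewrite Eun; split; first by apply: bigsetU_measurable => cs _; exact: Emeas.
rewrite measure_list_sum //; last 2 first.
- exact: enum_uniq.
- move=> x y Hxy; apply/seteqP; split => // w [[_ H1] [_ H2]]; move/eqP: Hxy; apply.
  apply/val_inj/(@eq_from_nth _ false); first by rewrite !size_tuple.
  by move=> i; rewrite size_tuple => Hi; rewrite -H1 // -H2.
apply: eq_bigr => cs _; rewrite Ev_coin // /wcs /wtp.
case: ifP => Hcond; last by rewrite measure0 mulr0.
by rewrite P_Ind // ?mulrA //; exact: (st_props (nth false cs) k).2.
Qed.

End Meas.

Arguments wcs {R}.
Definition rho k (cs : k.-tuple bool) : k.-tuple bool := rev_tuple (map_tuple negb cs).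
Arguments rho {k}.

Lemma rhoK k : involutive (@rho k).
Proof.
move=> cs; apply: val_inj => /=; rewrite map_rev revK -map_comp.
by rewrite (eq_map (g := id)) ?map_id // => x /=; rewrite negbK.
Qed.

Lemma st_tuple k (cs : k.-tuple bool) :
  (size (st (nth false cs) k).1, (st (nth false cs) k).2) = cntl cs.
Proof.
by rewrite st_cnt -{2}(mkseq_nth false cs) size_tuple.
Qed.

Lemma st_rho k (cs : k.-tuple bool) :
  (size (st (nth false (rho cs)) k).1, (st (nth false (rho cs)) k).2) =
  ((st (nth false cs) k).2, size (st (nth false cs) k).1).
Proof. by rewrite st_tuple /rho /= cntl_rev -st_tuple. Qed.

Lemma sum_sym (R : realType) (theta : Z4 -> R) M k a b : (k < M)%N ->
  (\sum_(cs <- enum {: k.-tuple bool}) (wcs theta M k a b cs)%:E)%E =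
  (\sum_(cs <- enum {: k.-tuple bool}) (wcs theta M k b a cs)%:E)%E.
Proof.
move=> kM; rewrite !big_enum /=.
rewrite [RHS](reindex_inj (inv_inj (@rhoK k))) /=.
apply: eq_bigr => cs _; rewrite /wcs.
have [E1 E2] : size (st (nth false (rho cs)) k).1 = (st (nth false cs) k).2 /\
               (st (nth false (rho cs)) k).2 = size (st (nth false cs) k).1.
  by have [-> ->] := st_rho k cs.
rewrite E1 E2 (@wtp_sym R theta M (st (nth false cs) k).2) //.
- by have := st_size (nth false cs) k; lia.
- by have := st_size (nth false cs) k; lia.
Qed.

Definition PreS (M : nat) (a b : nat -> Z4) : set ((nat -> Z4) * (nat -> Z4)) :=
  [set p | forall r, (r < M)%N -> p.1 r = a r /\ p.2 r = b r].

Definition GP (k : nat) : set (set ((nat -> Z4) * (nat -> Z4))) :=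
  [set A | A = set0 \/ exists M a b, (k < M)%N /\ A = PreS M a b].

Lemma GP_setI k : setI_closed (GP k).
Proof.
have key : forall M a b M' a' b', (M <= M')%N ->
    PreS M a b `&` PreS M' a' b' = set0 \/ PreS M a b `&` PreS M' a' b' = PreS M' a' b'.
  move=> M a b M' a' b' HM.
  case: (pselect (forall r, (r < M)%N -> a r = a' r /\ b r = b' r)) => H.
    right; apply/seteqP; split => p; first by case.
    move=> Hp; split => // r Hr; have [E1 E2] := H r Hr; have [E3 E4] := Hp r (leq_trans Hr HM).
    by rewrite E1 E2.
  left; apply/seteqP; split => // p [H1 H2]; apply: H => r Hr.
  have [E1 E2] := H1 r Hr; have [E3 E4] := H2 r (leq_trans Hr HM).
  by rewrite -E1 -E2.
move=> A B [->|[M [a [b [kM ->]]]]]; first by rewrite set0I; left.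
move=> [->|[M' [a' [b' [kM' ->]]]]]; first by rewrite setI0; left.
case: (leqP M M') => HM.
  by case: (key M a b M' a' b' HM) => ->; [left | right; exists M', a', b'].
by rewrite setIC; case: (key M' a' b' M a b (ltnW HM)) => ->; [left | right; exists M, a, b].
Qed.

Definition pref (M : nat) (p : (nat -> Z4) * (nat -> Z4)) : seq (Z4 * Z4) :=
  [seq (p.1 r, p.2 r) | r <- iota 0 M].

Lemma pref_nth M p r : (r < M)%N -> nth (0, 0) (pref M p) r = (p.1 r, p.2 r).
Proof. by move=> Hr; rewrite /pref (nth_map 0%N) ?size_iota // nth_iota. Qed.

Definition PreL (M : nat) (l : seq (Z4 * Z4)) :=
  PreS M (fun r => (nth (0, 0) l r).1) (fun r => (nth (0, 0) l r).2).

Lemma PreL_pref M p : PreL M (pref M p) p.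
Proof. by move=> r Hr; rewrite pref_nth. Qed.

Lemma cyl_gen k (g : Z4 * Z4 -> Z4) m x :
  (<<s GP k >>) [set p | g (p.1 m, p.2 m) = x].
Proof.
set M := maxn m.+1 k.+1.
pose F n := match (unpickle n : option (seq (Z4 * Z4))) with
  | Some l => if g (nth (0, 0) l m) == x then PreL M l else set0
  | None => set0 end.
have -> : [set p | g (p.1 m, p.2 m) = x] = \bigcup_n F n.
  apply/seteqP; split => p.
    move=> Hp; exists (pickle (pref M p)) => //; rewrite /F pickleK pref_nth; last by lia.
    by rewrite Hp eqxx; exact: PreL_pref.
  move=> [n _]; rewrite /F; case: (unpickle n) => [l|] //.
  case: eqP => // <- Hp /=; have [-> ->] := Hp m ltac:(lia).
  by case: (nth _ l m).
case: (smallest_sigma_algebra setT (GP k)) => _ _; apply => n.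
apply: sub_gen_smallest; rewrite /F; case: (unpickle n) => [l|]; last by left.
case: ifP => _; last by left.
by right; exists M, (fun r => (nth (0, 0) l r).1), (fun r => (nth (0, 0) l r).2); split => //; lia.
Qed.

Lemma cyl_sub k : <<s seq_pair_cylinders >> `<=` <<s GP k >>.
Proof.
apply: smallest_sub; first exact: smallest_sigma_algebra.
move=> A [m [x [->|->]]].
  exact: (cyl_gen k (fun q => q.1) m x).
exact: (cyl_gen k (fun q => q.2) m x).
Qed.

Section Main.
Context (R : realType) (theta : Z4 -> R) (d : measure_display) (Omega : measurableType d)
  (P : probability Omega R)
  (xi : nat -> Omega -> Z4) (c : nat -> Omega -> bool) (X : nat -> Omega -> Z4).
Context (Hxi : forall i, discrete_rv (xi i)) (Hc : forall n, discrete_rv (c n))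
  (HX : forall n, discrete_rv (X n)).
Context (Pxi : forall i x, P (xi i @^-1` [set x]) = (theta x)%:E)
  (Pc : forall n, P (c n @^-1` [set true]) = (2^-1 : R)%:E)
  (PX : forall n x, P (X n @^-1` [set x]) = (theta x)%:E).
Context (Hind : mutually_independent P (fun a : (nat + nat) + nat =>
     match a with
     | inl (inl i) => preimages (xi i)
     | inl (inr n) => preimages (c n)
     | inr n => preimages (X n)
     end)).
Context (k : nat).

Let Wk' w := Wk d Omega xi c X k w.
Definition Y1 w := (ptail (snake_init (fun i => xi i w)), ptail (Wk' w)).
Definition Y2 w := (ptail (Wk' w), ptail (snake_init (fun i => xi i w))).
Definition E0 := [set w | ptail (Wk' w) 0%N = 0].

Lemma pre1 M a b : Y1 @^-1` PreS M a b `&` E0 = Ev d Omega xi c X k M a b.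
Proof. by apply/seteqP; split => w. Qed.

Lemma pre2 M a b : Y2 @^-1` PreS M a b `&` E0 = Ev d Omega xi c X k M b a.
Proof.
apply/seteqP; split => w [H1 H2]; split => // r Hr.
  by have [] := H1 r Hr.
by have [] := H1 r Hr.
Qed.

Let PEv := @P_Ev R theta d Omega P xi c X Hxi Hc HX Pxi Pc PX Hind.

Lemma E0_meas : measurable E0.
Proof.
pose F n := match (unpickle n : option (seq (Z4 * Z4))) with
  | Some l => Ev d Omega xi c X k k.+1 (fun r => (nth (0, 0) l r).1) (fun r => (nth (0, 0) l r).2)
  | None => set0 end.
have -> : E0 = \bigcup_n F n.
  apply/seteqP; split => w.
    move=> Hw; exists (pickle (pref k.+1 (Y1 w))) => //; rewrite /F pickleK.
    by split => // r Hr; rewrite pref_nth.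
  move=> [n _]; rewrite /F; case: (unpickle n) => [l|] //.
  by move=> [].
apply: bigcup_measurable => n _; rewrite /F; case: (unpickle n) => [l|] //.
by have [] := PEv k k.+1 (fun r => (nth (0, 0) l r).1) (fun r => (nth (0, 0) l r).2) (ltnSn k).
Qed.

Definition HH : set (set ((nat -> Z4) * (nat -> Z4))) :=
  [set B | [/\ measurable (Y1 @^-1` B `&` E0), measurable (Y2 @^-1` B `&` E0) &
             P (Y1 @^-1` B `&` E0) = P (Y2 @^-1` B `&` E0)]].

Lemma GP_HH : GP k `<=` HH.
Proof.
move=> A [->|[M [a [b [kM ->]]]]].
  by rewrite /HH /= !preimage_set0 !set0I; split => //; rewrite measure0.
rewrite /HH /= pre1 pre2.
have [m1 e1] := PEv k M a b kM; have [m2 e2] := PEv k M b a kM.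
by split => //; rewrite e1 e2 sum_sym.
Qed.

Lemma HH_dynkin : dynkin HH.
Proof.
have mE := E0_meas.
have Pfin : (P E0 < +oo)%E.
  by have := fin_num_measure P E0 mE => /fin_numPlt /andP[_ ->].
split.
- rewrite /HH /= !preimage_setT !setTI; split => //.
- move=> B [m1 m2 e]; rewrite /HH /=.
  have eC : forall Y : Omega -> (nat -> Z4) * (nat -> Z4),
      Y @^-1` (~` B) `&` E0 = E0 `\` (Y @^-1` B `&` E0).
    by move=> Y; apply/seteqP; split => w /=; [move=> [H1 H2]; split => // -[] | move=> [H1 H2]; split => // H3; apply: H2].
  rewrite !eC; split; [exact: measurableD | exact: measurableD |].
  rewrite !measureD //.
  have eI : forall A, E0 `&` (A `&` E0) = A `&` E0.
    by move=> A; rewrite setIC -setIA setIid.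
  by rewrite !eI; exact: (congr1 (fun z => (P E0 - z)%E) e).
- move=> F tF HF.
  have eU : forall Y : Omega -> (nat -> Z4) * (nat -> Z4),
      Y @^-1` (\bigcup_n F n) `&` E0 = \bigcup_n (Y @^-1` F n `&` E0).
    by move=> Y; apply/seteqP; split => w /=; [move=> [[n _ H1] H2]; exists n | move=> [n _ [H1 H2]]; split => //; exists n].
  have tY : forall Y : Omega -> (nat -> Z4) * (nat -> Z4),
      trivIset setT (fun n => Y @^-1` F n `&` E0).
    move=> Y i j _ _ [w [[H1 _] [H2 _]]]; by apply: (tF i j) => //; exists (Y w).
  rewrite /HH /mkset !eU; split.
  + by apply: bigcup_measurable => n _; have [] := HF n.
  + by apply: bigcup_measurable => n _; have [] := HF n.
  + rewrite !measure_bigcup //; last 2 first.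
    * by move=> n _; have [] := HF n.
    * by move=> n _; have [] := HF n.
    by apply: eq_eseriesr => n _; have [] := HF n.
Qed.

Lemma main_eq B : seq_pair_measurable B ->
  P (Y1 @^-1` B `&` E0) = P (Y2 @^-1` B `&` E0).
Proof.
move=> HB.
have sub := lambda_system_subset (GP_setI k) ((dynkin_lambda_system _).1 HH_dynkin)
   GP_HH (fun A _ => @subsetT _ A).
have [] := sub B (@cyl_sub k B HB) => //.
Qed.

End Main.

Theorem lemma3p9 (R : realType) (theta : Z4 -> R) (sigma : R)
  (d : measure_display) (Omega : measurableType d) (P : probability Omega R)
  (xi : nat -> Omega -> Z4) (c : nat -> Omega -> bool) (X : nat -> Omega -> Z4)
  (k : nat) :
  is_pmf theta -> symmetric_law theta -> small_exp_moments theta ->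
  generating_support theta -> covariance_scalar theta sigma ->
  (forall i, discrete_rv (xi i)) -> (forall n, discrete_rv (c n)) ->
  (forall n, discrete_rv (X n)) ->
  (forall i x, P (xi i @^-1` [set x]) = (theta x)%:E) ->
  (forall n, P (c n @^-1` [set true]) = (2^-1 : R)%:E) ->
  (forall n x, P (X n @^-1` [set x]) = (theta x)%:E) ->
  mutually_independent P (fun a : (nat + nat) + nat =>
     match a with
     | inl (inl i) => preimages (xi i)
     | inl (inr n) => preimages (c n)
     | inr n => preimages (X n)
     end) ->
  let W := fun (n : nat) (w : Omega) =>
    snake (snake_init (fun i => xi i w)) (fun m => c m w) (fun m => X m w) n in
  let E := [set w | phat (W k w) = 0] in
  (1 <= k)%N ->
  (0 < P E)%E ->
  forall B, seq_pair_measurable B ->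
    condP P E [set w | B (pshift (W 0%N w), pshift (W k w))] =
    condP P E [set w | B (pshift (W k w), pshift (W 0%N w))].
Proof.
move=> _ _ _ _ _ Hxi Hc HX Pxi Pc PX Hind W E Hk HPE B HB.
have e := @main_eq R theta d Omega P xi c X Hxi Hc HX Pxi Pc PX Hind k B HB.
rewrite /condP; congr (fine _ / _).
exact: e.
Qed.
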